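(* Let $p,q$ be bivariate polynomials in $(n,N)$ with nonnegative integer coefficients, both of degree $k>1$, neither depending only on $N$, with decompositions as in the context, $P_k,Q_k$ non-constant and $Q_k(0)\le P_k(0)$. Suppose there are real constants $c,r$ such that $\gamma_k(y)=cy$ and $R_k(y)=r$ for all $y\in(0,1]$. Then either $q$ and $p$ have exploding differences, or $c$ and $r$ are rational, there is a constant $d$ such that $q(cn+r,N)-p(n,N)=d$ identically in $n,N$ (so $q,p$ are $\mathbb Q$-equivalent), and for every $\delta\in(0,1)$ there are $W_\delta>0$ and $N_\delta$ such that for all $N>N_\delta$, all integers $\delta N\le n\le N$ and all $m\in\mathbb N$: either $m=cn+r$ (and then $q(m,N)-p(n,N)=d$), or $|q(m,N)-p(n,N)|\ge W_\delta N^{k-1}$.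
   Context: For $p,q$ of degree $k$ write, with $y_1=n/N$, $y_2=m/N$: $p(n,N)=\sum_{j=0}^kN^jP_j(y_1)$ and $q(m,N)=\sum_{j=0}^kN^jQ_j(y_2)$ where $P_j,Q_j$ are polynomials of degree at most $j$. Define $\gamma_k=Q_k^{-1}\circ P_k$ on $[0,\infty)$ and $R_k(y)=\big(P_{k-1}(y)-Q_{k-1}(\gamma_k(y))\big)/Q_k'(\gamma_k(y))$. The degree of a bivariate polynomial $p(x,y)$ is the degree of $p(x,x)$. Exploding differences: $q,p$ have exploding differences if for every $\delta\in(0,1)$ there are $C_\delta>0$, $N_\delta$ and sets $\Gamma_{N,\delta}\subset[1,N]$ of cardinality at most $\delta N$ such that for all $N>N_\delta$ and all integers $n\in[\delta N,N]\setminus\Gamma_{N,\delta}$, $\min_{m\in[\delta N,N]\cap\mathbb N}|q(m,N)-p(n,N)|\ge C_\delta N$. Two polynomials $q,p$ are $\mathbb Q$-equivalent if there exist rationals $c,r$ such that $q(cn+r,N)-p(n,N)$ does not depend on $n$ and $N$. *)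

(* Defs.v *)
From Stdlib Require Import Reals Lra Lia List Arith QArith Qreals ClassicalEpsilon.
Open Scope R_scope.

(* A bivariate polynomial in (n,N) with nonnegative integer coefficients is
   represented as a finite list of terms (c, a, b), standing for c * n^a * N^b
   (c : nat).  Repeated monomials are allowed; coefficients add up. *)
Definition term : Type := (nat * nat * nat)%type.
Definition bipoly : Type := list term.

Definition beval (p : bipoly) (x y : R) : R :=
  fold_right (fun (t : term) acc => let '(c, a, b) := t in
    INR c * x ^ a * y ^ b + acc) 0 p.

Definition coef (p : bipoly) (a b : nat) : nat :=
  fold_right (fun (t : term) acc => let '(c, a', b') := t in
    ((if andb (Nat.eqb a' a) (Nat.eqb b' b) then c else 0) + acc)%nat) 0%nat p.

Definition diag_coef (p : bipoly) (j : nat) : nat :=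
  fold_right (fun (t : term) acc => let '(c, a, b) := t in
    ((if Nat.eqb (a + b) j then c else 0) + acc)%nat) 0%nat p.

(* degree of p := degree of p(x,x) *)
Definition has_degree (p : bipoly) (k : nat) : Prop :=
  diag_coef p k <> 0%nat /\ forall j, (k < j)%nat -> diag_coef p j = 0%nat.

Definition depends_on_n (p : bipoly) : Prop :=
  exists a b, (1 <= a)%nat /\ coef p a b <> 0%nat.

(* P_j, where p(n,N) = sum_j N^j P_j(n/N):  P_j(y) = sum_{a+b=j} c_{ab} y^a *)
Definition Pj (p : bipoly) (j : nat) (y : R) : R :=
  fold_right (fun (t : term) acc => let '(c, a, b) := t in
    (if Nat.eqb (a + b) j then INR c * y ^ a else 0) + acc) 0 p.

Definition dPj (p : bipoly) (j : nat) (y : R) : R :=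
  fold_right (fun (t : term) acc => let '(c, a, b) := t in
    (if Nat.eqb (a + b) j then INR c * INR a * y ^ (a - 1) else 0) + acc) 0 p.

Definition Pj_nonconstant (p : bipoly) (j : nat) : Prop :=
  exists a b, (1 <= a)%nat /\ (a + b = j)%nat /\ coef p a b <> 0%nat.

(* gamma_k = Q_k^{-1} o P_k on [0,oo), Q_k^{-1} being the inverse of Q_k
   restricted to [0,oo) (chosen by definite description) *)
Definition gammak (p q : bipoly) (k : nat) (y : R) : R :=
  epsilon (inhabits 0) (fun z => 0 <= z /\ Pj q k z = Pj p k y).

Definition Rk (p q : bipoly) (k : nat) (y : R) : R :=
  (Pj p (k - 1) y - Pj q (k - 1) (gammak p q k y)) / dPj q k (gammak p q k y).

Definition exploding_differences (q p : bipoly) : Prop :=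
  forall delta : R, 0 < delta < 1 ->
    exists (C : R) (Nd : nat) (Gamma : nat -> list nat),
      0 < C /\
      (forall N, Forall (fun g => (1 <= g <= N)%nat) (Gamma N) /\
                 INR (length (Gamma N)) <= delta * INR N) /\
      forall N : nat, (Nd < N)%nat ->
        forall n : nat, delta * INR N <= INR n <= INR N -> ~ In n (Gamma N) ->
          forall m : nat, delta * INR N <= INR m <= INR N ->
            Rabs (beval q (INR m) (INR N) - beval p (INR n) (INR N)) >= C * INR N.

(* Main.v *)
Require Import Defs.
From Stdlib Require Import Reals Lra Lia List Arith ZArith QArith Qreals ClassicalEpsilon Classical.
Open Scope R_scope.


Definition deg_ok (k : nat) (p : bipoly) : Prop :=
  forall co a b, In (co,a,b) p -> (k < a+b)%nat -> co = 0%nat.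

Lemma diag_zero p j : diag_coef p j = 0%nat ->
  forall co a b, In (co,a,b) p -> (a+b = j)%nat -> co = 0%nat.
Proof.
  induction p as [|[[co' a'] b'] p IH]; simpl; intros H co a b Hin Hab; [contradiction|].
  destruct Hin as [E|Hin].
  - inversion E; subst. rewrite Nat.eqb_refl in H. lia.
  - apply (IH ltac:(lia) co a b Hin Hab).
Qed.

Lemma hasdeg_ok p k : has_degree p k -> deg_ok k p.
Proof.
  intros [_ H] co a b Hin Hk. apply (diag_zero p (a+b) (H _ Hk) co a b Hin eq_refl).
Qed.

Lemma pow_diff (x x' : R) (a : nat) : 0 <= x <= x' ->
  (x' - x) * x'^a <= x'^(S a) - x^(S a).
Proof.
  intros Hx. induction a as [|a IH]; simpl; [lra|].
  assert (0 <= x ^ S a) by (apply pow_le; lra).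
  assert (x^(S a) <= x'^(S a)) by (apply pow_incr; lra).
  simpl in *. nra.
Qed.

Lemma pow_diff' (x x' : R) (a : nat) : (1 <= a)%nat -> 0 <= x <= x' ->
  (x' - x) * x'^(a-1) <= x'^a - x^a.
Proof.
  intros Ha Hx. destruct a as [|a]; [lia|]. replace (S a - 1)%nat with a by lia.
  apply pow_diff; auto.
Qed.

Lemma beval_diff_ge q a b x x' y : 0 <= x <= x' -> 0 <= y ->
  INR (coef q a b) * (x'^a - x^a) * y^b <= beval q x' y - beval q x y.
Proof.
  intros Hx Hy. induction q as [|[[co a'] b'] q IH]; simpl.
  - lra.
  - rewrite plus_INR.
    assert (H1: 0 <= INR co * (x'^a' - x^a') * y^b').
    { apply Rmult_le_pos; [apply Rmult_le_pos; [apply pos_INR|]|apply pow_le; lra].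
      assert (x^a' <= x'^a') by (apply pow_incr; lra). lra. }
    assert (0 <= x'^a - x^a) by (assert (x^a <= x'^a) by (apply pow_incr; lra); lra).
    assert (0 <= y^b) by (apply pow_le; lra).
    destruct (Nat.eqb a' a) eqn:E1; destruct (Nat.eqb b' b) eqn:E2; simpl;
      try (apply Nat.eqb_eq in E1; apply Nat.eqb_eq in E2; subst); nra.
Qed.

Lemma Pj_diff_ge p j a b x x' : (a + b = j)%nat -> 0 <= x <= x' ->
  INR (coef p a b) * (x'^a - x^a) <= Pj p j x' - Pj p j x.
Proof.
  intros Hab Hx. induction p as [|[[co a'] b'] p IH]; unfold Pj in *; simpl.
  - lra.
  - rewrite plus_INR.
    assert (0 <= x'^a - x^a) by (assert (x^a <= x'^a) by (apply pow_incr; lra); lra).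
    assert (0 <= x'^a' - x^a') by (assert (x^a' <= x'^a') by (apply pow_incr; lra); lra).
    assert (0 <= INR co) by apply pos_INR.
    destruct (Nat.eqb a' a) eqn:E1; destruct (Nat.eqb b' b) eqn:E2; simpl;
      try (apply Nat.eqb_eq in E1; apply Nat.eqb_eq in E2; subst);
      try rewrite Nat.eqb_refl;
      try (match goal with |- context [Nat.eqb (?u + ?v) ?w] => destruct (Nat.eqb (u+v) w) eqn:? end); nra.
Qed.

Lemma dPj_ge p j a b z : (a + b = j)%nat -> 0 <= z ->
  INR (coef p a b) * INR a * z^(a-1) <= dPj p j z.
Proof.
  intros Hab Hz. induction p as [|[[co a'] b'] p IH]; unfold dPj in *; simpl.
  - lra.
  - rewrite plus_INR.
    assert (0 <= INR co * INR a' * z^(a'-1)).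
    { apply Rmult_le_pos; [apply Rmult_le_pos; apply pos_INR|apply pow_le; lra]. }
    assert (0 <= INR a * z^(a-1)) by (apply Rmult_le_pos; [apply pos_INR|apply pow_le; lra]).
    destruct (Nat.eqb a' a) eqn:E1; destruct (Nat.eqb b' b) eqn:E2; simpl;
      try (apply Nat.eqb_eq in E1; apply Nat.eqb_eq in E2; subst);
      try rewrite Nat.eqb_refl;
      try (match goal with |- context [Nat.eqb (?u + ?v) ?w] => destruct (Nat.eqb (u+v) w) eqn:? end); nra.
Qed.

Lemma coef_ge1 p a b : coef p a b <> 0%nat -> 1 <= INR (coef p a b).
Proof. intros H. apply (le_INR 1). lia. Qed.

Lemma Pj_cont (p : bipoly) j : continuity (Pj p j).
Proof.
  induction p as [|[[co a] b] p IH].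
  - unfold Pj; simpl. apply continuity_const. intros x y; reflexivity.
  - change (continuity (fun z => (if Nat.eqb (a+b) j then INR co * z^a else 0) + Pj p j z)).
    destruct (Nat.eqb (a+b) j).
    + apply (continuity_plus (fun z => INR co * z^a) (Pj p j)); [|exact IH].
      apply derivable_continuous. reg.
    + apply (continuity_plus (fun z => 0) (Pj p j)); [|exact IH].
      apply continuity_const. intros x y; reflexivity.
Qed.


Lemma Pj_mono p j x x' : 0 <= x <= x' -> Pj p j x <= Pj p j x'.
Proof.
  intros Hx. pose proof (Pj_diff_ge p j 0 j x x' eq_refl Hx). simpl in H.
  assert (0 <= INR (coef p 0 j)) by apply pos_INR. nra.
Qed.

Lemma Pj_grow p j x x' : Pj_nonconstant p j -> 0 <= x <= x' ->
  exists a, (1 <= a)%nat /\ (x' - x) * x'^(a-1) <= Pj p j x' - Pj p j x.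
Proof.
  intros [a [b [Ha [Hab Hc]]]] Hx. exists a; split; auto.
  pose proof (Pj_diff_ge p j a b x x' Hab Hx).
  pose proof (coef_ge1 _ _ _ Hc). pose proof (pow_diff' x x' a Ha Hx).
  assert (0 <= (x'-x) * x'^(a-1)) by (apply Rmult_le_pos; [lra|apply pow_le; lra]).
  nra.
Qed.

Lemma Pj_exists p q k y : Pj_nonconstant q k -> Pj q k 0 <= Pj p k 0 -> 0 <= y ->
  exists z, 0 <= z /\ Pj q k z = Pj p k y.
Proof.
  intros Hq H0 Hy.
  assert (Hm: Pj p k 0 <= Pj p k y) by (apply Pj_mono; lra).
  set (Z := 1 + Pj p k y - Pj q k 0).
  destruct (Pj_grow q k 0 Z Hq ltac:(unfold Z; lra)) as [a [Ha Hg]].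
  assert (1 <= Z^(a-1)) by (apply pow_R1_Rle; unfold Z; lra).
  assert (HZ: 1 <= Z) by (unfold Z; lra).
  destruct (IVT_cor (fun z => Pj q k z - Pj p k y) 0 Z) as [z [Hz Hf]].
  - apply (continuity_minus (Pj q k) (fun _ => Pj p k y)). apply Pj_cont.
    apply continuity_const. intros u v; reflexivity.
  - lra.
  - assert (Z * Z^(a-1) >= Z * 1) by (apply Rle_ge, Rmult_le_compat_l; lra).
    assert (Pj q k Z - Pj p k y >= 0) by (unfold Z in *; lra).
    assert (Pj q k 0 - Pj p k y <= 0) by lra. nra.
  - exists z; split; [lra|]. simpl in Hf. lra.
Qed.

Lemma dPj_pos q k z : Pj_nonconstant q k -> 0 < z -> 0 < dPj q k z.
Proof.
  intros [a [b [Ha [Hab Hc]]]] Hz.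
  pose proof (dPj_ge q k a b z Hab ltac:(lra)). pose proof (coef_ge1 _ _ _ Hc).
  assert (1 <= INR a) by (apply (le_INR 1); lia).
  assert (0 < z^(a-1)) by (apply pow_lt; lra).
  assert (0 < INR (coef q a b) * INR a * z^(a-1)).
  { apply Rmult_lt_0_compat; [|auto]. apply Rmult_lt_0_compat; lra. }
  lra.
Qed.

Lemma gamma_facts p q k c r :
  Pj_nonconstant p k -> Pj_nonconstant q k -> Pj q k 0 <= Pj p k 0 ->
  (forall y, 0 < y <= 1 -> gammak p q k y = c * y) ->
  (forall y, 0 < y <= 1 -> Rk p q k y = r) ->
  0 < c /\ forall y, 0 < y <= 1 -> Pj q k (c*y) = Pj p k y /\
     r * dPj q k (c*y) = Pj p (k-1) y - Pj q (k-1) (c*y).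
Proof.
  intros Hp Hq H0 Hg Hr.
  assert (Hspec: forall y, 0 < y <= 1 -> 0 <= c*y /\ Pj q k (c*y) = Pj p k y).
  { intros y Hy. rewrite <- (Hg y Hy). unfold gammak. apply epsilon_spec.
    apply Pj_exists; auto; lra. }
  assert (Hc: 0 < c).
  { destruct (Hspec 1 ltac:(lra)) as [H1 H2]. rewrite Rmult_1_r in *.
    destruct (Pj_grow p k 0 1 Hp ltac:(lra)) as [a [Ha Hgr]].
    rewrite pow1 in Hgr.
    destruct (Req_dec c 0) as [E|E]; [|lra]. subst c. lra. }
  split; auto. intros y Hy. destruct (Hspec y Hy) as [_ E]. split; auto.
  pose proof (Hr y Hy) as HR. unfold Rk in HR. rewrite (Hg y Hy) in HR.
  assert (0 < dPj q k (c*y)) by (apply dPj_pos; auto; nra).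
  rewrite <- HR. field. lra.
Qed.


Section Exp.
Variables (r M : R).
Hypothesis HM : 1 <= M.
Hypothesis HrM : Rabs r <= M.

Lemma u_bound w y : Rabs w <= M -> 1 <= y -> Rabs (w*y) <= M * y.
Proof. intros Hw Hy. rewrite Rabs_mult, (Rabs_right y) by lra. nra. Qed.

Lemma ur_bound w y : Rabs w <= M -> 1 <= y -> Rabs (w*y + r) <= 2 * M * y.
Proof.
  intros Hw Hy. pose proof (u_bound w y Hw Hy).
  pose proof (Rabs_triang (w*y) r). nra.
Qed.

Lemma pow_abs_bound x B a : Rabs x <= B -> Rabs (x^a) <= B^a.
Proof.
  intros H. rewrite <- RPow_abs. apply pow_incr. split; [apply Rabs_pos|auto].
Qed.

Lemma G_bound a : exists K, forall w y, Rabs w <= M -> 1 <= y ->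
  Rabs ((w*y + r)^a) <= K * y^a.
Proof.
  exists ((2*M)^a). intros w y Hw Hy.
  rewrite <- Rpow_mult_distr. apply pow_abs_bound.
  pose proof (ur_bound w y Hw Hy). lra.
Qed.

Lemma F_bound a : exists K, forall w y, Rabs w <= M -> 1 <= y ->
  Rabs ((w*y + r)^a - (w*y)^a) * y <= K * y^a.
Proof.
  induction a as [|a [K IH]].
  - exists 0. intros. simpl. rewrite Rminus_diag, Rabs_R0. lra.
  - exists (2*M*K + M^(S a)). intros w y Hw Hy.
    set (u := w*y). set (e := (u+r)^a - u^a).
    assert (E: (u+r)^(S a) - u^(S a) = (u+r)*e + r*u^a) by (unfold e; simpl; ring).
    rewrite E.
    pose proof (IH w y Hw Hy) as H1. fold u e in H1.
    pose proof (ur_bound w y Hw Hy) as H2. fold u in H2.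
    pose proof (pow_abs_bound u (M*y) a (u_bound w y Hw Hy)) as H3.
    rewrite Rpow_mult_distr in H3.
    assert (Hy0: 0 <= y) by lra.
    assert (HyA: 0 <= y^a) by (apply pow_le; lra).
    assert (HMa: 0 <= M^a) by (apply pow_le; lra).
    pose proof (Rabs_triang ((u+r)*e) (r*u^a)) as T.
    rewrite !Rabs_mult in T.
    assert (A1: Rabs (u+r) * Rabs e * y <= 2*M*y * (K * y^a)).
    { replace (Rabs (u+r) * Rabs e * y) with (Rabs (u+r) * (Rabs e * y)) by ring.
      apply Rmult_le_compat; [apply Rabs_pos | apply Rmult_le_pos; [apply Rabs_pos|lra] | lra | lra]. }
    assert (A2: Rabs r * Rabs (u^a) * y <= M * (M^a*y^a) * y).
    { apply Rmult_le_compat_r; auto. apply Rmult_le_compat; auto; apply Rabs_pos. }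
    simpl. nra.
Qed.

Lemma E_bound a : exists K, forall w y, Rabs w <= M -> 1 <= y ->
  Rabs ((w*y + r)^a - (w*y)^a - INR a * r * (w*y)^(a-1)) * y^2 <= K * y^a.
Proof.
  induction a as [|a [K IH]].
  - exists 0. intros. simpl. replace (1 - 1 - 0 * r * 1) with 0 by ring. rewrite Rabs_R0. lra.
  - destruct a as [|a].
    + exists 0. intros. simpl. replace ((w*y+r)*1 - w*y*1 - 1*r*1) with 0 by ring.
      rewrite Rabs_R0. lra.
    + exists (2*M*K + INR (S a) * M^(S (S a))). intros w y Hw Hy.
      set (u := w*y). set (e := (u+r)^(S a) - u^(S a) - INR (S a) * r * u^(S a - 1)).
      assert (E: (u+r)^(S (S a)) - u^(S (S a)) - INR (S (S a)) * r * u^(S (S a) - 1)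
                 = (u+r)*e + INR (S a) * r^2 * u^a).
      { unfold e. replace (S a - 1)%nat with a by lia. replace (S (S a) - 1)%nat with (S a) by lia.
        rewrite !S_INR. simpl. ring. }
      rewrite E.
      pose proof (IH w y Hw Hy) as H1. fold u e in H1.
      pose proof (ur_bound w y Hw Hy) as H2. fold u in H2.
      pose proof (pow_abs_bound u (M*y) a (u_bound w y Hw Hy)) as H3.
      rewrite Rpow_mult_distr in H3.
      assert (Hy0: 0 <= y) by lra.
      assert (HyA: 0 <= y^(S a)) by (apply pow_le; lra).
      assert (HyA': 0 <= y^a) by (apply pow_le; lra).
      assert (HMa: 0 <= M^a) by (apply pow_le; lra).
      assert (Hr2: Rabs (r^2) <= M^2) by (apply pow_abs_bound; auto).
      assert (HSa: 0 <= INR (S a)) by apply pos_INR.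
      pose proof (Rabs_triang ((u+r)*e) (INR (S a) * r^2 * u^a)) as T.
      rewrite !Rabs_mult in T. rewrite (Rabs_right (INR (S a))) in T by lra.
      assert (A1: Rabs (u+r) * Rabs e * y^2 <= 2*M*y * (K * y^(S a))).
      { replace (Rabs (u+r) * Rabs e * y^2) with (Rabs (u+r) * (Rabs e * y^2)) by ring.
        assert (0 <= y^2) by (apply pow_le; lra).
        apply Rmult_le_compat; [apply Rabs_pos | apply Rmult_le_pos; [apply Rabs_pos|lra] | lra | lra]. }
      assert (A2: INR (S a) * Rabs (r^2) * Rabs (u^a) * y^2 <= INR (S a) * M^2 * (M^a*y^a) * y^2).
      { apply Rmult_le_compat_r; [apply pow_le; lra|].
        apply Rmult_le_compat; try (apply Rabs_pos).
        - apply Rmult_le_pos; auto; apply Rabs_pos.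
        - apply Rmult_le_compat_l; auto.
        - auto. }
      simpl in *. nra.
Qed.

Definition approx (k : nat) (co a b : nat) (w y : R) : R :=
  y^k * (if Nat.eqb (a+b) k then INR co * w^a else 0) +
  y^(k-1) * (r * (if Nat.eqb (a+b) k then INR co * INR a * w^(a-1) else 0) +
             (if Nat.eqb (a+b) (k-1) then INR co * w^a else 0)).

Lemma term_bound k co a b : (2 <= k)%nat -> ((k < a+b)%nat -> co = 0%nat) ->
  exists K, forall w y, Rabs w <= M -> 1 <= y ->
  Rabs (INR co * (w*y + r)^a * y^b - approx k co a b w y) * y^2 <= K * y^k.
Proof.
  intros Hk Hdeg. unfold approx.
  assert (Hco: 0 <= INR co) by apply pos_INR.
  destruct (Nat.eqb (a+b) k) eqn:E1.
  - apply Nat.eqb_eq in E1.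
    assert (E2: Nat.eqb (a+b) (k-1) = false) by (apply Nat.eqb_neq; lia). rewrite E2.
    destruct (E_bound a) as [K HK]. exists (INR co * K). intros w y Hw Hy.
    assert (Hyb: 0 <= y^b) by (apply pow_le; lra).
    assert (Eq: INR co * (w*y + r)^a * y^b -
        (y^k * (INR co * w^a) + y^(k-1) * (r * (INR co * INR a * w^(a-1)) + 0))
        = INR co * y^b * ((w*y + r)^a - (w*y)^a - INR a * r * (w*y)^(a-1))).
    { subst k. destruct a as [|a].
      - simpl. ring.
      - replace (S a + b - 1)%nat with (a + b)%nat by lia. replace (S a - 1)%nat with a by lia.
        rewrite !pow_add, !Rpow_mult_distr. simpl. ring. }
    rewrite Eq, !Rabs_mult, (Rabs_right (INR co)), (Rabs_right (y^b)) by lra.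
    specialize (HK w y Hw Hy).
    replace (y^k) with (y^a * y^b) by (subst k; rewrite pow_add; ring).
    set (e := Rabs ((w*y + r)^a - (w*y)^a - INR a * r * (w*y)^(a-1))) in *.
    replace (INR co * y^b * e * y^2) with ((INR co * y^b) * (e * y^2)) by ring.
    replace (INR co * K * (y^a * y^b)) with ((INR co * y^b) * (K * y^a)) by ring.
    apply Rmult_le_compat_l; [nra|auto].
  - destruct (Nat.eqb (a+b) (k-1)) eqn:E2.
    + apply Nat.eqb_eq in E2. apply Nat.eqb_neq in E1.
      destruct (F_bound a) as [K HK]. exists (INR co * K). intros w y Hw Hy.
      assert (Hyb: 0 <= y^b) by (apply pow_le; lra).
      assert (Eq: INR co * (w*y + r)^a * y^b - (y^k * 0 + y^(k-1) * (r * 0 + INR co * w^a))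
          = INR co * y^b * ((w*y + r)^a - (w*y)^a)).
      { rewrite <- E2, pow_add, Rpow_mult_distr. ring. }
      rewrite Eq, !Rabs_mult, (Rabs_right (INR co)), (Rabs_right (y^b)) by lra.
      specialize (HK w y Hw Hy).
      replace (y^k) with (y^a * y^b * y) by (replace k with (S (a+b)) by lia; simpl; rewrite pow_add; ring).
      set (e := Rabs ((w*y + r)^a - (w*y)^a)) in *.
      replace (INR co * y^b * e * y^2) with ((INR co * y^b * y) * (e * y)) by ring.
      replace (INR co * K * (y^a * y^b * y)) with ((INR co * y^b * y) * (K * y^a)) by ring.
      apply Rmult_le_compat_l; [repeat apply Rmult_le_pos; lra|auto].
    + apply Nat.eqb_neq in E1. apply Nat.eqb_neq in E2.
      destruct (G_bound a) as [K HK]. exists (INR co * K). intros w y Hw Hy.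
      assert (Hyb: 0 <= y^b) by (apply pow_le; lra).
      replace (INR co * (w*y + r)^a * y^b - (y^k * 0 + y^(k-1) * (r * 0 + 0)))
        with (INR co * y^b * (w*y + r)^a) by ring.
      destruct (Nat.lt_ge_cases k (a+b)) as [Hl|Hl].
      * rewrite (Hdeg Hl). simpl. rewrite !Rmult_0_l, Rabs_R0, Rmult_0_l.
        assert (K0: 0 <= Rabs ((w*y+r)^a)) by apply Rabs_pos.
        specialize (HK w y Hw Hy). assert (0 <= y^k) by (apply pow_le; lra).
        assert (0 <= y^a) by (apply pow_le; lra). nra.
      * rewrite !Rabs_mult, (Rabs_right (INR co)), (Rabs_right (y^b)) by lra.
        specialize (HK w y Hw Hy).
        assert (0 <= y^a) by (apply pow_le; lra).
        assert (K0: 0 <= Rabs ((w*y+r)^a)) by apply Rabs_pos.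
        assert (0 <= K) by (assert (0 < y^a) by (apply pow_lt; lra); nra).
        assert (Hp: y^(a+b+2) <= y^k) by (apply Rle_pow; [lra|lia]).
        rewrite !pow_add in Hp.
        assert (INR co * y^b * Rabs ((w*y+r)^a) * y^2 <= INR co * y^b * (K * y^a) * y^2).
        { apply Rmult_le_compat_r; [apply pow_le; lra|]. apply Rmult_le_compat_l; nra. }
        assert (0 <= INR co * K) by nra.
        simpl in *. nra.
Qed.

Lemma list_bound k q : (2 <= k)%nat -> deg_ok k q ->
  exists K, forall w y, Rabs w <= M -> 1 <= y ->
  Rabs (beval q (w*y + r) y - (y^k * Pj q k w + y^(k-1) * (r * dPj q k w + Pj q (k-1) w))) * y^2
   <= K * y^k.
Proof.
  intros Hk. induction q as [|[[co a] b] q IH]; intros Hdeg.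
  - exists 0. intros. unfold beval, Pj, dPj; simpl.
    replace (0 - (y^k*0 + y^(k-1)*(r*0+0))) with 0 by ring. rewrite Rabs_R0. lra.
  - destruct IH as [K1 H1].
    { intros co' a' b' Hin. apply (Hdeg co' a' b'). right; auto. }
    destruct (term_bound k co a b Hk (Hdeg co a b (or_introl eq_refl))) as [K2 H2].
    exists (K2 + K1). intros w y Hw Hy.
    specialize (H1 w y Hw Hy). specialize (H2 w y Hw Hy). unfold approx in H2.
    change (beval ((co,a,b)::q) (w*y+r) y) with (INR co * (w*y+r)^a * y^b + beval q (w*y+r) y).
    change (Pj ((co,a,b)::q) k w) with ((if Nat.eqb (a+b) k then INR co * w^a else 0) + Pj q k w).
    change (Pj ((co,a,b)::q) (k-1) w) with ((if Nat.eqb (a+b) (k-1) then INR co * w^a else 0) + Pj q (k-1) w).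
    change (dPj ((co,a,b)::q) k w) with ((if Nat.eqb (a+b) k then INR co * INR a * w^(a-1) else 0) + dPj q k w).
    set (A := INR co * (w*y+r)^a * y^b). set (B := beval q (w*y+r) y).
    set (i1 := if Nat.eqb (a+b) k then INR co * w^a else 0).
    set (i2 := if Nat.eqb (a+b) (k-1) then INR co * w^a else 0).
    set (i3 := if Nat.eqb (a+b) k then INR co * INR a * w^(a-1) else 0).
    fold i1 i2 i3 A in H2. fold B in H1.
    set (X := A - (y^k*i1 + y^(k-1)*(r*i3 + i2))) in H2.
    set (Y := B - (y^k*Pj q k w + y^(k-1)*(r*dPj q k w + Pj q (k-1) w))) in H1.
    replace (A + B - (y^k*(i1 + Pj q k w) + y^(k-1)*(r*(i3 + dPj q k w) + (i2 + Pj q (k-1) w))))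
      with (X + Y) by (unfold X, Y; ring).
    pose proof (Rabs_triang X Y).
    assert (0 <= y^2) by (apply pow_le; lra). nra.
Qed.
End Exp.


Lemma D_small p q k c r : (2 <= k)%nat -> deg_ok k p -> deg_ok k q -> 0 < c ->
  (forall y, 0 < y <= 1 -> Pj q k (c*y) = Pj p k y /\
     r * dPj q k (c*y) = Pj p (k-1) y - Pj q (k-1) (c*y)) ->
  exists K, forall x y, 0 < x <= y -> 1 <= y ->
    Rabs (beval q (c*x + r) y - beval p x y) * y^2 <= K * y^k.
Proof.
  intros Hk Hp Hq Hc Hid.
  set (M := 1 + Rabs c + Rabs r).
  assert (HM: 1 <= M) by (unfold M; pose proof (Rabs_pos c); pose proof (Rabs_pos r); lra).
  assert (HrM: Rabs r <= M) by (unfold M; pose proof (Rabs_pos c); lra).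
  assert (H0M: Rabs 0 <= M) by (rewrite Rabs_R0; lra).
  destruct (list_bound r M HM HrM k q Hk Hq) as [Kq HKq].
  destruct (list_bound 0 M HM H0M k p Hk Hp) as [Kp HKp].
  exists (Kq + Kp). intros x y Hx Hy.
  set (s := x / y).
  assert (Hs: 0 < s <= 1).
  { unfold s. split; [apply Rdiv_lt_0_compat; lra|].
    apply (Rmult_le_reg_r y); [lra|]. unfold Rdiv. rewrite Rmult_assoc, Rinv_l by lra. lra. }
  assert (Hxs: x = s * y) by (unfold s; field; lra).
  assert (Hw: Rabs (c*s) <= M).
  { rewrite Rabs_mult, (Rabs_right s) by lra. pose proof (Rabs_pos c).
    unfold M. pose proof (Rabs_pos r). nra. }
  assert (Hw': Rabs s <= M) by (rewrite Rabs_right by lra; lra).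
  specialize (HKq (c*s) y Hw Hy). specialize (HKp s y Hw' Hy).
  destruct (Hid s Hs) as [E1 E2].
  replace (c * x + r) with (c*s*y + r) by (rewrite Hxs; ring).
  replace (beval p x y) with (beval p (s*y + 0) y) by (rewrite Hxs; f_equal; ring).
  set (A := beval q (c*s*y + r) y) in *. set (B := beval p (s*y + 0) y) in *.
  set (X := A - (y^k * Pj q k (c*s) + y^(k-1) * (r * dPj q k (c*s) + Pj q (k-1) (c*s)))) in *.
  set (Y := B - (y^k * Pj p k s + y^(k-1) * (0 * dPj p k s + Pj p (k-1) s))) in *.
  replace (A - B) with (X - Y) by (unfold X, Y; rewrite E1, E2; ring).
  pose proof (Rabs_triang X (-Y)). rewrite Rabs_Ropp in H.
  assert (0 <= y^2) by (apply pow_le; lra). unfold Rminus. nra.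
Qed.


Lemma large_N (A : R) : exists N1 : nat, forall N : nat, (N1 < N)%nat -> A < INR N.
Proof.
  destruct (INR_unbounded A) as [n Hn]. exists n. intros N HN.
  apply lt_INR in HN. lra.
Qed.

Lemma div_lt a b y : 0 < b -> a / b <= y -> a <= b * y.
Proof.
  intros Hb H. apply (Rmult_le_compat_l b) in H; [|lra].
  unfold Rdiv in H. rewrite <- Rmult_assoc, (Rmult_comm b a), Rmult_assoc, Rinv_r, Rmult_1_r in H by lra.
  exact H.
Qed.

Lemma div_nonneg a b : 0 <= a -> 0 < b -> 0 <= a / b.
Proof. intros. unfold Rdiv. apply Rle_mult_inv_pos; auto. Qed.

Lemma q_growth q a b x x' y : (1 <= a)%nat -> coef q a b <> 0%nat -> 0 <= x <= x' -> 0 <= y ->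
   (x' - x) * x'^(a-1) * y^b <= beval q x' y - beval q x y.
Proof.
  intros Ha Hc Hx Hy.
  pose proof (beval_diff_ge q a b x x' y Hx Hy). pose proof (coef_ge1 _ _ _ Hc).
  pose proof (pow_diff' x x' a Ha Hx).
  assert (0 <= y^b) by (apply pow_le; lra).
  assert (0 <= (x'-x) * x'^(a-1)) by (apply Rmult_le_pos; [lra|apply pow_le; lra]).
  assert (0 <= x'^a - x^a) by lra.
  assert ((x'-x)*x'^(a-1)*y^b <= (x'^a - x^a) * y^b) by (apply Rmult_le_compat_r; lra).
  assert ((x'^a - x^a) * y^b <= INR (coef q a b) * (x'^a - x^a) * y^b).
  { rewrite Rmult_assoc. pattern ((x'^a - x^a)*y^b) at 1. rewrite <- Rmult_1_l.
    apply Rmult_le_compat_r; [apply Rmult_le_pos|]; lra. }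
  lra.
Qed.

Lemma q_growth_abs q a b x x' y rho : (1 <= a)%nat -> coef q a b <> 0%nat ->
  0 <= x -> 0 <= x' -> 0 <= y -> 0 <= rho -> (rho <= x \/ rho <= x') ->
   Rabs (x' - x) * rho^(a-1) * y^b <= Rabs (beval q x' y - beval q x y).
Proof.
  intros Ha Hc Hx Hx' Hy Hr Hrho.
  destruct (Rle_dec x x') as [L|L].
  - pose proof (q_growth q a b x x' y Ha Hc ltac:(lra) Hy) as H.
    rewrite (Rabs_right (x'-x)) by lra.
    assert (rho^(a-1) <= x'^(a-1)) by (apply pow_incr; lra).
    assert (0 <= y^b) by (apply pow_le; lra).
    assert ((x'-x)*rho^(a-1)*y^b <= (x'-x)*x'^(a-1)*y^b).
    { apply Rmult_le_compat_r; auto. apply Rmult_le_compat_l; lra. }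
    pose proof (Rle_abs (beval q x' y - beval q x y)). lra.
  - pose proof (q_growth q a b x' x y Ha Hc ltac:(lra) Hy) as H.
    rewrite (Rabs_left1 (x'-x)) by lra.
    assert (rho^(a-1) <= x^(a-1)) by (apply pow_incr; lra).
    assert (0 <= y^b) by (apply pow_le; lra).
    assert ((x-x')*rho^(a-1)*y^b <= (x-x')*x^(a-1)*y^b).
    { apply Rmult_le_compat_r; auto. apply Rmult_le_compat_l; lra. }
    rewrite <- Rabs_Ropp. pose proof (Rle_abs (-(beval q x' y - beval q x y))). lra.
Qed.

Lemma key_bound p q k c r K : (2 <= k)%nat -> Pj_nonconstant q k -> 0 < c ->
  (forall x y, 0 < x <= y -> 1 <= y ->
    Rabs (beval q (c*x + r) y - beval p x y) * y^2 <= K * y^k) ->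
  forall delta t, 0 < delta < 1 -> 0 < t ->
  exists W, 0 < W /\ exists N1 : nat, forall N : nat, (N1 < N)%nat ->
    1 <= INR N /\
    forall n : nat, delta * INR N <= INR n <= INR N -> forall m : nat,
      t <= Rabs (INR m - (c * INR n + r)) ->
      W * INR N ^ (k-1) <= Rabs (beval q (INR m) (INR N) - beval p (INR n) (INR N)).
Proof.
  intros Hk Hq Hc HK delta t Hd Ht.
  set (rho := c * delta / 2).
  assert (Hrho: 0 < rho) by (unfold rho; nra).
  destruct Hq as [a0 [b0 [Ha0 [Hab0 Hc0]]]].
  set (W0 := t * rho^(a0-1)).
  assert (HW0: 0 < W0) by (unfold W0; apply Rmult_lt_0_compat; [lra|apply pow_lt; lra]).
  exists (W0/2). split; [lra|].
  destruct (large_N (1 + 2 * (Rabs r / rho) + Rabs K * 2 / W0)) as [N1 HN1].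
  exists N1. intros N HN. specialize (HN1 N HN).
  assert (Hr1: 0 <= Rabs r / rho) by (apply div_nonneg; [apply Rabs_pos|lra]).
  assert (Hr2: 0 <= Rabs K * 2 / W0) by (apply div_nonneg; [pose proof (Rabs_pos K); lra|lra]).
  assert (HN1': 1 <= INR N) by lra.
  split; auto.
  intros n Hn m Hm.
  set (x := c * INR n + r) in *. set (y := INR N) in *.
  assert (Hrx: rho * y <= x).
  { unfold x. assert (Rabs r <= rho * (y/2)).
    { assert (Rabs r / rho <= y/2) by lra.
      apply div_lt in H; lra. }
    pose proof (Rle_abs (-r)). rewrite Rabs_Ropp in H0.
    assert (c * (delta * y) <= c * INR n) by (apply Rmult_le_compat_l; lra).
    unfold rho in *. nra. }
  assert (Hx0: 0 <= x) by nra.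
  assert (Hm0: 0 <= INR m) by apply pos_INR.
  pose proof (q_growth_abs q a0 b0 x (INR m) y (rho*y) Ha0 Hc0
     Hx0 Hm0 ltac:(lra) ltac:(nra) (or_introl Hrx)) as Hg.
  set (a := a0) in *. set (b := b0) in *. assert (Hab: (a+b = k)%nat) by auto.
  assert (Epow: (rho*y)^(a-1) * y^b = rho^(a-1) * y^(k-1)).
  { rewrite Rpow_mult_distr. replace (k-1)%nat with ((a-1)+b)%nat by lia. rewrite pow_add. ring. }
  assert (HD: Rabs (beval q x y - beval p (INR n) y) * y^2 <= K * y^k).
  { apply HK; [split; [nra|lra]|lra]. }
  assert (Hyk: y^k = y^(k-1) * y) by (replace k with (S (k-1)) at 1 by lia; simpl; ring).
  assert (Hyk2: y^(k-1) = y^(k-2) * y) by (replace (k-1)%nat with (S (k-2)) at 1 by lia; simpl; ring).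
  assert (Hy2: 0 < y^(k-2)) by (apply pow_lt; lra).
  assert (HD': Rabs (beval q x y - beval p (INR n) y) <= Rabs K * y^(k-2)).
  { pose proof (Rle_abs K).
    assert (Hk2: y^k = y^(k-2) * y^2) by (rewrite <- pow_add; f_equal; lia).
    rewrite Hk2 in HD.
    assert (0 < y^2) by (apply pow_lt; lra).
    apply (Rmult_le_reg_r (y^2)); auto.
    apply Rle_trans with (K * (y^(k-2) * y^2)); auto.
    rewrite <- Rmult_assoc. apply Rmult_le_compat_r; [lra|]. apply Rmult_le_compat_r; lra. }
  assert (HG: t * rho^(a-1) * y^(k-1) <= Rabs (beval q (INR m) y - beval q x y)).
  { apply Rle_trans with (Rabs (INR m - x) * (rho*y)^(a-1) * y^b); auto.
    replace (Rabs (INR m - x) * (rho*y)^(a-1) * y^b) with (Rabs (INR m - x) * ((rho*y)^(a-1) * y^b)) by ring.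
    rewrite Epow.
    assert (0 <= rho^(a-1) * y^(k-1)) by (apply Rmult_le_pos; apply pow_le; lra).
    rewrite Rmult_assoc. apply Rmult_le_compat_r; auto. }
  assert (HW: Rabs K <= W0 / 2 * y).
  { assert (Rabs K * 2 / W0 <= y) by lra. apply div_lt in H; [|lra].
    replace (W0/2*y) with (W0 * y / 2) by field. lra. }
  assert (HKy: Rabs K * y^(k-2) <= W0 / 2 * y^(k-1)).
  { rewrite Hyk2. replace (W0/2 * (y^(k-2)*y)) with ((W0/2*y) * y^(k-2)) by ring.
    apply Rmult_le_compat_r; lra. }
  fold W0 in HG.
  replace (beval q (INR m) y - beval p (INR n) y) with
    ((beval q (INR m) y - beval q x y) + (beval q x y - beval p (INR n) y)) by ring.
  set (U := beval q (INR m) y - beval q x y) in *. set (V := beval q x y - beval p (INR n) y) in *.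
  pose proof (Rabs_triang_inv U (-V)) as T.
  rewrite Rabs_Ropp in T. replace (U - - V) with (U + V) in T by ring.
  lra.
Qed.


Fixpoint IsPoly (d : nat) (f : R -> R) : Prop :=
  match d with
  | O => forall x, f x = f 0
  | S d => exists g, IsPoly d g /\ forall x, f x = f 0 + x * g x
  end.

Lemma IsPoly_ext d : forall f g, (forall x, f x = g x) -> IsPoly d f -> IsPoly d g.
Proof.
  induction d as [|d IH]; simpl; intros f g E H.
  - intros x. rewrite <- !E. apply H.
  - destruct H as [h [Hh Hf]]. exists h. split; auto. intros x. rewrite <- !E. apply Hf.
Qed.

Lemma IsPoly_const d c : IsPoly d (fun _ => c).
Proof.
  induction d as [|d IH]; simpl; auto.
  exists (fun _ => 0). split; [|intros; ring].
  clear IH. induction d; simpl; auto. exists (fun _ => 0). split; auto. intros; ring.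
Qed.

Lemma IsPoly_S d : forall f, IsPoly d f -> IsPoly (S d) f.
Proof.
  induction d as [|d IH]; intros f H.
  - simpl. exists (fun _ => 0). split; [intros; reflexivity|]. intros x. rewrite (H x). ring.
  - destruct H as [g [Hg Hf]]. exists g. split; auto.
Qed.

Lemma IsPoly_le d e f : (d <= e)%nat -> IsPoly d f -> IsPoly e f.
Proof.
  intros Hde. induction Hde; auto. intros H. apply IsPoly_S; auto.
Qed.

Lemma IsPoly_add d : forall f g, IsPoly d f -> IsPoly d g -> IsPoly d (fun x => f x + g x).
Proof.
  induction d as [|d IH]; simpl; intros f g Hf Hg.
  - intros x. rewrite Hf, Hg. auto.
  - destruct Hf as [f1 [Hf1 Ef]]. destruct Hg as [g1 [Hg1 Eg]].
    exists (fun x => f1 x + g1 x). split; auto. intros x. rewrite (Ef x), (Eg x). ring.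
Qed.

Lemma IsPoly_scal d : forall a f, IsPoly d f -> IsPoly d (fun x => a * f x).
Proof.
  induction d as [|d IH]; simpl; intros a f Hf.
  - intros x. rewrite Hf. auto.
  - destruct Hf as [f1 [Hf1 Ef]]. exists (fun x => a * f1 x). split; auto.
    intros x. rewrite (Ef x). ring.
Qed.

Lemma IsPoly_mulx d f : IsPoly d f -> IsPoly (S d) (fun x => x * f x).
Proof. intros H. exists f. split; auto. intros x. ring. Qed.

Lemma IsPoly_aff_mul d al be f : IsPoly d f -> IsPoly (S d) (fun x => (al*x + be) * f x).
Proof.
  intros H. apply (IsPoly_ext _ (fun x => al * (x * f x) + be * f x)); [intros; ring|].
  apply IsPoly_add.
  - apply IsPoly_scal, IsPoly_mulx; auto.
  - apply IsPoly_scal, IsPoly_S; auto.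
Qed.

Lemma IsPoly_pow_aff a al be : IsPoly a (fun x => (al*x + be)^a).
Proof.
  induction a as [|a IH].
  - simpl. intros; auto.
  - apply (IsPoly_ext _ (fun x => (al*x+be) * (al*x+be)^a)); [intros; simpl; ring|].
    apply IsPoly_aff_mul; auto.
Qed.

Lemma IsPoly_factor d : forall f, IsPoly (S d) f -> forall a,
  exists g, IsPoly d g /\ forall x, f x - f a = (x - a) * g x.
Proof.
  induction d as [|d IH]; intros f [g [Hg Ef]] a.
  - exists g. split; auto. intros x. rewrite (Ef x), (Ef a), (Hg x), (Hg a). ring.
  - destruct (IH g Hg a) as [h [Hh Eh]].
    exists (fun x => g x + a * h x). split.
    + apply IsPoly_add; auto. apply IsPoly_S, IsPoly_scal; auto.
    + intros x. rewrite (Ef x), (Ef a).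
      replace (f 0 + x * g x - (f 0 + a * g a)) with ((x - a) * g x + a * (g x - g a)) by ring.
      rewrite Eh. ring.
Qed.

Lemma IsPoly_roots d : forall f l, IsPoly d f -> NoDup l -> (S d <= length l)%nat ->
  (forall x, In x l -> f x = 0) -> forall x, f x = 0.
Proof.
  induction d as [|d IH]; intros f l Hf Hl Hlen Hz x.
  - destruct l as [|a l]; [simpl in Hlen; lia|]. simpl in Hf. rewrite Hf, <- (Hf a). apply Hz; left; auto.
  - destruct l as [|a l]; [simpl in Hlen; lia|].
    destruct (IsPoly_factor d f Hf a) as [g [Hg Eg]].
    inversion Hl; subst.
    assert (Hg0: forall x, g x = 0).
    { apply (IH g l Hg); auto. simpl in Hlen; lia. intros y Hy.
      assert (y <> a) by (intros E; subst; contradiction).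
      pose proof (Eg y). rewrite (Hz y (or_intror Hy)), (Hz a (or_introl eq_refl)) in H0.
      assert ((y - a) <> 0) by lra.
      apply (Rmult_eq_reg_l (y - a)); auto. lra. }
    pose proof (Eg x). rewrite Hg0, (Hz a (or_introl eq_refl)) in H. lra.
Qed.

Lemma IsPoly_grow d : forall g, IsPoly d g -> (exists x, g x <> 0) ->
  exists C Y, 0 < C /\ forall y, Y <= y -> C <= Rabs (g y).
Proof.
  induction d as [|d IH]; intros g Hg [x0 Hx0].
  - exists (Rabs (g 0)), 0. simpl in Hg. rewrite Hg in Hx0. split.
    + apply Rabs_pos_lt; auto.
    + intros y _. rewrite (Hg y). lra.
  - destruct Hg as [h [Hh Eg]].
    destruct (classic (exists x, h x <> 0)) as [Hne|Hz].
    + destruct (IH h Hh Hne) as [C [Y [HC HY]]].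
      exists C, (Rmax 1 (Rmax Y ((Rabs (g 0) + C) / C))). split; auto. intros y Hy.
      pose proof (Rmax_l 1 (Rmax Y ((Rabs (g 0) + C) / C))).
      pose proof (Rmax_r 1 (Rmax Y ((Rabs (g 0) + C) / C))).
      pose proof (Rmax_l Y ((Rabs (g 0) + C) / C)).
      pose proof (Rmax_r Y ((Rabs (g 0) + C) / C)).
      specialize (HY y ltac:(lra)).
      assert (H4: Rabs (g 0) + C <= C * y).
      { assert ((Rabs (g 0) + C) / C <= y) by lra.
        apply (Rmult_le_compat_l C) in H3; [|lra]. unfold Rdiv in H3.
        rewrite <- Rmult_assoc, (Rmult_comm C), Rmult_assoc, Rinv_r, Rmult_1_r in H3 by lra. lra. }
      rewrite (Eg y).
      pose proof (Rabs_triang_inv (y * h y) (- g 0)). rewrite Rabs_Ropp in H3.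
      replace (y * h y - - g 0) with (g 0 + y * h y) in H3 by ring.
      rewrite Rabs_mult, (Rabs_right y) in H3 by lra.
      assert (C * y <= y * Rabs (h y)) by nra. lra.
    + assert (forall x, h x = 0) by (intros x; apply NNPP; intros N; apply Hz; exists x; auto).
      exists (Rabs (g 0)), 0. rewrite (Eg x0), H in Hx0. split.
      * apply Rabs_pos_lt. lra.
      * intros y _. rewrite (Eg y), H. replace (g 0 + y * 0) with (g 0) by ring. lra.
Qed.

Lemma beval_IsPoly_x k q al be y : deg_ok k q -> IsPoly k (fun x => beval q (al*x + be) y).
Proof.
  induction q as [|[[co a] b] q IH]; intros Hd.
  - apply (IsPoly_const k 0).
  - change (IsPoly k (fun x => INR co * (al*x+be)^a * y^b + beval q (al*x+be) y)).
    apply IsPoly_add; [|apply IH; intros c' a' b' Hin; apply (Hd c' a' b'); right; auto].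
    destruct (Nat.le_gt_cases (a+b) k) as [L|L].
    + apply (IsPoly_ext _ (fun x => (INR co * y^b) * (al*x+be)^a)); [intros; ring|].
      apply IsPoly_scal. apply (IsPoly_le a); [lia|]. apply IsPoly_pow_aff.
    + rewrite (Hd co a b (or_introl eq_refl) L). simpl.
      apply (IsPoly_ext _ (fun _ => 0)); [intros; cbv beta; ring|]. apply IsPoly_const.
Qed.

Lemma beval_IsPoly_y k q X : deg_ok k q -> IsPoly k (fun y => beval q X y).
Proof.
  induction q as [|[[co a] b] q IH]; intros Hd.
  - apply (IsPoly_const k 0).
  - change (IsPoly k (fun y => INR co * X^a * y^b + beval q X y)).
    apply IsPoly_add; [|apply IH; intros c' a' b' Hin; apply (Hd c' a' b'); right; auto].
    destruct (Nat.le_gt_cases (a+b) k) as [L|L].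
    + apply (IsPoly_ext _ (fun y => (INR co * X^a) * (1*y+0)^b)).
      { intros z. cbv beta. replace (1*z+0) with z by ring. ring. }
      apply IsPoly_scal. apply (IsPoly_le b); [lia|]. apply IsPoly_pow_aff.
    + rewrite (Hd co a b (or_introl eq_refl) L).
      apply (IsPoly_ext _ (fun _ => 0)); [intros; cbv beta; simpl; ring|]. apply IsPoly_const.
Qed.


Definition Rltb (x y : R) : bool := if Rlt_dec x y then true else false.
Lemma Rltb_true x y : Rltb x y = true <-> x < y.
Proof. unfold Rltb. destruct (Rlt_dec x y); split; intros; auto; try discriminate; contradiction. Qed.
Lemma Rltb_false x y : Rltb x y = false <-> ~ x < y.
Proof. unfold Rltb. destruct (Rlt_dec x y); split; intros; auto; try discriminate; contradiction. Qed.

Section Gap.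
Variable bad : nat -> bool.
Variable L : nat.
Hypothesis HL : (1 <= L)%nat.
Hypothesis Hgap : forall n1 n2, bad n1 = true -> bad n2 = true -> (n1 < n2)%nat -> (L <= n2 - n1)%nat.

Definition cnt (N : nat) : nat := length (filter bad (seq 1 N)).

Lemma cnt_S N : cnt (S N) = (cnt N + if bad (S N) then 1 else 0)%nat.
Proof.
  unfold cnt. rewrite seq_S, filter_app, length_app. simpl.
  replace (1 + N)%nat with (S N) by lia. destruct (bad (S N)); simpl; lia.
Qed.

Lemma cnt_window N t : (t <= L)%nat ->
  cnt (N + t) = cnt N \/ (cnt (N + t) = S (cnt N) /\ exists b, (N < b <= N + t)%nat /\ bad b = true).
Proof.
  induction t as [|t IH]; intros Ht.
  - left. f_equal. lia.
  - replace (N + S t)%nat with (S (N + t)) by lia. rewrite cnt_S.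
    destruct (bad (S (N + t))) eqn:Eb.
    + destruct (IH ltac:(lia)) as [E|[E [b [Hb Hbb]]]].
      * right. split; [lia|]. exists (S (N+t)). split; [lia|auto].
      * exfalso. pose proof (Hgap b (S (N+t)) Hbb Eb ltac:(lia)). lia.
    + rewrite Nat.add_0_r. destruct (IH ltac:(lia)) as [E|[E [b [Hb Hbb]]]]; [left; auto|].
      right. split; auto. exists b. split; [lia|auto].
Qed.

Lemma cnt_bound j N : (N <= j * L)%nat -> (cnt N <= S j)%nat.
Proof.
  revert N. induction j as [|j IH]; intros N HN.
  - simpl in HN. assert (N = 0%nat) by lia. subst. unfold cnt. simpl. lia.
  - destruct (Nat.le_gt_cases N (j * L)) as [H|H]; [specialize (IH N H); lia|].
    replace N with (j*L + (N - j*L))%nat by lia.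
    destruct (cnt_window (j*L) (N - j*L) ltac:(simpl in HN; lia)) as [E|[E _]];
      rewrite E; specialize (IH (j*L)%nat (le_n _)); lia.
Qed.

Lemma cnt_real N : INR (cnt N) <= INR N / INR L + 2.
Proof.
  assert (HLr: 0 < INR L) by (apply lt_0_INR; lia).
  assert (H: (N <= (N / L + 1) * L)%nat).
  { pose proof (Nat.div_mod N L ltac:(lia)). pose proof (Nat.mod_upper_bound N L ltac:(lia)). nia. }
  pose proof (cnt_bound _ _ H).
  apply le_INR in H0. rewrite S_INR, plus_INR in H0. simpl in H0.
  assert (INR (N / L) * INR L <= INR N).
  { rewrite <- mult_INR. apply le_INR. rewrite Nat.mul_comm. apply Nat.Div0.mul_div_le. }
  assert (INR (N / L) <= INR N / INR L).
  { apply (Rmult_le_reg_r (INR L)); auto. unfold Rdiv. rewrite Rmult_assoc, Rinv_l by lra. lra. }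
  lra.
Qed.
End Gap.

Lemma filter_all_false {A} (f : A -> bool) l : (forall x, In x l -> f x = false) -> filter f l = nil.
Proof.
  induction l as [|a l IH]; simpl; intros H; auto.
  rewrite (H a (or_introl eq_refl)). apply IH. intros; apply H; auto.
Qed.

Definition badb (eps x : R) : bool :=
  orb (Rltb (x - IZR (Int_part x)) eps) (Rltb (1 - eps) (x - IZR (Int_part x))).

Lemma not_bad_far eps x : badb eps x = false -> forall z : Z, eps <= Rabs (IZR z - x).
Proof.
  unfold badb. intros H z. apply orb_false_iff in H. destruct H as [H1 H2].
  apply Rltb_false in H1. apply Rltb_false in H2.
  pose proof (base_Int_part x) as [B1 B2].
  destruct (Z_le_gt_dec z (Int_part x)) as [Hz|Hz].
  - apply IZR_le in Hz. rewrite Rabs_left1 by lra. lra.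
  - assert (IZR (Int_part x) + 1 <= IZR z) by (rewrite <- plus_IZR; apply IZR_le; lia).
    rewrite Rabs_right by lra. lra.
Qed.

Lemma bad_near eps x : 0 < eps -> badb eps x = true -> exists z : Z, Rabs (x - IZR z) < eps.
Proof.
  unfold badb. intros He H. apply orb_true_iff in H. pose proof (base_Int_part x) as [B1 B2].
  destruct H as [H|H]; apply Rltb_true in H.
  - exists (Int_part x). rewrite Rabs_right by lra. lra.
  - exists (Int_part x + 1)%Z. rewrite plus_IZR. rewrite Rabs_left1 by lra. lra.
Qed.

Lemma nonint_dist x : (forall z : Z, x <> IZR z) -> exists eps, 0 < eps /\ forall z : Z, eps <= Rabs (x - IZR z).
Proof.
  intros H. pose proof (base_Int_part x) as [B1 B2].
  assert (Hne: x <> IZR (Int_part x)) by apply H.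
  set (fr := x - IZR (Int_part x)).
  exists (Rmin fr (1 - fr)). split.
  - apply Rmin_glb_lt; unfold fr; lra.
  - intros z. pose proof (Rmin_l fr (1-fr)). pose proof (Rmin_r fr (1-fr)).
    destruct (Z_le_gt_dec z (Int_part x)) as [Hz|Hz].
    + apply IZR_le in Hz. rewrite Rabs_right by lra. unfold fr in *. lra.
    + assert (IZR (Int_part x) + 1 <= IZR z) by (rewrite <- plus_IZR; apply IZR_le; lia).
      rewrite Rabs_left1 by lra. unfold fr in *. lra.
Qed.

Lemma finite_dist (f : nat -> R) L : (forall j, (j < L)%nat -> forall z : Z, f j <> IZR z) ->
  exists eps, 0 < eps /\ forall j, (j < L)%nat -> forall z : Z, eps <= Rabs (f j - IZR z).
Proof.
  induction L as [|L IH]; intros H.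
  - exists 1. split; [lra|]. intros; lia.
  - destruct IH as [e1 [He1 H1]]; [intros; apply H; lia|].
    destruct (nonint_dist (f L) (H L ltac:(lia))) as [e2 [He2 H2]].
    exists (Rmin e1 e2). split; [apply Rmin_glb_lt; auto|].
    intros j Hj z. pose proof (Rmin_l e1 e2). pose proof (Rmin_r e1 e2).
    destruct (Nat.eq_dec j L) as [E|E].
    + subst. specialize (H2 z). lra.
    + specialize (H1 j ltac:(lia) z). lra.
Qed.

Lemma Q2R_frac (z : Z) (d : positive) : Q2R (Qmake z d) = IZR z / IZR (Zpos d).
Proof. unfold Q2R. simpl. reflexivity. Qed.

Lemma density c r : ~ ((exists qc : Q, c = Q2R qc) /\ (exists qr : Q, r = Q2R qr)) ->
  forall delta, 0 < delta -> exists eps, 0 < eps /\ exists N1 : nat, forall N : nat, (N1 < N)%nat ->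
    INR (length (filter (fun n => badb eps (c * INR n + r)) (seq 1 N))) <= delta * INR N.
Proof.
  intros Hnr delta Hd.
  destruct (classic (exists qc : Q, c = Q2R qc)) as [[qc Hc]|Hc].
  -
    assert (Hr: ~ exists qr : Q, r = Q2R qr) by (intros Hr; apply Hnr; split; eauto).
    destruct qc as [num den]. rewrite Q2R_frac in Hc.
    set (D := IZR (Zpos den)).
    assert (HD: 0 < D) by (unfold D; apply IZR_lt; lia).
    destruct (finite_dist (fun i => INR i / D + r) (Pos.to_nat den)) as [eps [He Heps]].
    { intros j Hj z E. apply Hr. exists (Qmake (z * Zpos den - Z.of_nat j) den).
      rewrite Q2R_frac. fold D. rewrite minus_IZR, mult_IZR, <- INR_IZR_INZ. fold D.
      assert (r = IZR z - INR j / D) by lra. rewrite H. field. lra. }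
    exists eps. split; auto. exists 0%nat. intros N HN.
    assert (Hf: filter (fun n => badb eps (c * INR n + r)) (seq 1 N) = nil).
    { apply filter_all_false. intros n _.
      destruct (badb eps (c * INR n + r)) eqn:Eb; auto. exfalso.
      destruct (bad_near _ _ He Eb) as [z Hz].
      set (M := (num * Z.of_nat n)%Z).
      pose proof (Z.div_mod M (Zpos den) ltac:(lia)) as HM.
      pose proof (Z.mod_pos_bound M (Zpos den) ltac:(lia)) as HMb.
      set (i := Z.to_nat (M mod Zpos den)).
      assert (Hi: (i < Pos.to_nat den)%nat) by (unfold i; lia).
      specialize (Heps i Hi (z - M / Zpos den)%Z).
      assert (E: c * INR n + r - IZR z = INR i / D + r - IZR (z - M / Zpos den)).
      { rewrite Hc, minus_IZR. unfold i. rewrite (INR_IZR_INZ (Z.to_nat _)), Z2Nat.id by lia.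
        assert (IZR M = D * IZR (M / Zpos den) + IZR (M mod Zpos den)).
        { unfold D. rewrite <- mult_IZR, <- plus_IZR. f_equal. exact HM. }
        assert (IZR M = IZR num * INR n) by (unfold M; rewrite mult_IZR, INR_IZR_INZ; auto).
        fold D. apply (Rmult_eq_reg_l D); [|lra]. field_simplify; [|lra|lra]. nra. }
      rewrite <- E in Heps. lra. }
    rewrite Hf. simpl. apply Rmult_le_pos; [lra|apply pos_INR].
  -
    destruct (large_N (4 / delta)) as [L0 HL0].
    set (L := S L0). assert (HLd: 4 / delta < INR L) by (apply HL0; unfold L; lia).
    destruct (finite_dist (fun j => INR (S j) * c) L) as [e [He Heps]].
    { intros j Hj z E. apply Hc. exists (Qmake z (Pos.of_succ_nat j)).
      rewrite Q2R_frac, Zpos_P_of_succ_nat, <- Nat2Z.inj_succ, <- INR_IZR_INZ.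
      assert (0 < INR (S j)) by (apply lt_0_INR; lia). rewrite <- E. field. lra. }
    exists (e/2). split; [lra|].
    destruct (large_N (8 / delta)) as [N1 HN1]. exists N1. intros N HN.
    specialize (HN1 N HN).
    set (bad := fun n => badb (e/2) (c * INR n + r)).
    assert (Hgap: forall n1 n2, bad n1 = true -> bad n2 = true -> (n1 < n2)%nat -> (L <= n2 - n1)%nat).
    { intros n1 n2 B1 B2 Hlt. destruct (Nat.le_gt_cases L (n2 - n1)) as [G|G]; auto. exfalso.
      destruct (bad_near (e/2) (c * INR n1 + r) ltac:(lra) B1) as [z1 Hz1].
      destruct (bad_near (e/2) (c * INR n2 + r) ltac:(lra) B2) as [z2 Hz2].
      set (j := (n2 - n1 - 1)%nat).
      specialize (Heps j ltac:(unfold j; lia) (z2 - z1)%Z).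
      replace (INR (S j)) with (INR n2 - INR n1) in Heps
        by (unfold j; rewrite <- minus_INR by lia; f_equal; lia).
      rewrite minus_IZR in Heps.
      replace ((INR n2 - INR n1) * c - (IZR z2 - IZR z1)) with
        ((c * INR n2 + r - IZR z2) - (c * INR n1 + r - IZR z1)) in Heps by ring.
      assert (Rabs ((c * INR n2 + r - IZR z2) - (c * INR n1 + r - IZR z1)) <=
              Rabs (c * INR n2 + r - IZR z2) + Rabs (c * INR n1 + r - IZR z1)).
      { unfold Rminus at 1. rewrite <- (Rabs_Ropp (c * INR n1 + r - IZR z1)). apply Rabs_triang. }
      lra. }
    pose proof (cnt_real bad L ltac:(unfold L; lia) Hgap N) as Hc1. unfold cnt in Hc1. fold bad.
    assert (HLp: 0 < INR L) by (apply lt_0_INR; unfold L; lia).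
    assert (HN0: 0 < INR N) by (assert (0 <= 8/delta) by (apply div_nonneg; lra); lra).
    assert (INR N / INR L <= delta / 4 * INR N).
    { assert (4 <= delta * INR L) by (apply div_lt; lra).
      apply (Rmult_le_reg_r (INR L)); auto. unfold Rdiv. rewrite Rmult_assoc, Rinv_l by lra. nra. }
    assert (8 <= delta * INR N) by (apply div_lt; lra).
    lra.
Qed.


Definition IsInt (x : R) : Prop := exists z : Z, x = IZR z.

Lemma IsInt_add x y : IsInt x -> IsInt y -> IsInt (x + y).
Proof. intros [a Ha] [b Hb]. exists (a+b)%Z. rewrite plus_IZR. subst; auto. Qed.
Lemma IsInt_mul x y : IsInt x -> IsInt y -> IsInt (x * y).
Proof. intros [a Ha] [b Hb]. exists (a*b)%Z. rewrite mult_IZR. subst; auto. Qed.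
Lemma IsInt_pow x n : IsInt x -> IsInt (x ^ n).
Proof. intros H. induction n; simpl. exists 1%Z; auto. apply IsInt_mul; auto. Qed.
Lemma IsInt_IZR z : IsInt (IZR z). Proof. exists z; auto. Qed.
Lemma IsInt_INR n : IsInt (INR n). Proof. exists (Z.of_nat n). apply INR_IZR_INZ. Qed.
Lemma IsInt_0 : IsInt 0. Proof. exists 0%Z; auto. Qed.

Lemma IsInt_ge1 x : IsInt x -> x <> 0 -> 1 <= Rabs x.
Proof.
  intros [z Hz] H. subst. rewrite <- abs_IZR. apply IZR_le.
  assert (z <> 0%Z) by (intros E; subst; apply H; auto). lia.
Qed.

Lemma beval_int_scaled k q (t e Y : Z) : deg_ok k q -> IZR e <> 0 ->
  IsInt ((IZR e)^k * beval q (IZR t / IZR e) (IZR Y)).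
Proof.
  intros Hd He. induction q as [|[[co a] b] q IH].
  - simpl. rewrite Rmult_0_r. apply IsInt_0.
  - change (IsInt (IZR e ^ k * (INR co * (IZR t / IZR e)^a * IZR Y^b + beval q (IZR t / IZR e) (IZR Y)))).
    rewrite Rmult_plus_distr_l. apply IsInt_add; [|apply IH; intros c' a' b' Hin; apply (Hd c' a' b'); right; auto].
    destruct (Nat.le_gt_cases (a+b) k) as [L|L].
    + replace (IZR e ^ k * (INR co * (IZR t / IZR e)^a * IZR Y^b))
        with (INR co * IZR t ^ a * IZR e ^ (k - a) * IZR Y ^ b).
      * repeat apply IsInt_mul; try apply IsInt_pow; try apply IsInt_INR; apply IsInt_IZR.
      * replace k with (a + (k - a))%nat at 2 by lia. rewrite pow_add.
        unfold Rdiv. rewrite Rpow_mult_distr, pow_inv.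
        field. apply pow_nonzero; auto.
    + rewrite (Hd co a b (or_introl eq_refl) L). simpl. rewrite !Rmult_0_l, Rmult_0_r. apply IsInt_0.
Qed.

Lemma beval_int q X Y : IsInt X -> IsInt Y -> IsInt (beval q X Y).
Proof.
  intros HX HY. induction q as [|[[co a] b] q IH]; simpl; [apply IsInt_0|].
  apply IsInt_add; auto. repeat apply IsInt_mul; try apply IsInt_pow; auto. apply IsInt_INR.
Qed.

Lemma spacing (T e : Z) (m : nat) : 0 < IZR e -> INR m <> IZR T / IZR e ->
  1 / IZR e <= Rabs (INR m - IZR T / IZR e).
Proof.
  intros He H.
  assert (Hi: IsInt (IZR e * (INR m - IZR T / IZR e))).
  { replace (IZR e * (INR m - IZR T / IZR e)) with (IZR e * INR m - IZR T) by (field; lra).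
    apply IsInt_add; [apply IsInt_mul; [apply IsInt_IZR|apply IsInt_INR]|].
    exists (-T)%Z. rewrite opp_IZR. ring. }
  assert (Hnz: IZR e * (INR m - IZR T / IZR e) <> 0).
  { intros E. apply Rmult_integral in E. destruct E; [lra|]. apply H. lra. }
  pose proof (IsInt_ge1 _ Hi Hnz). rewrite Rabs_mult, (Rabs_right (IZR e)) in H0 by lra.
  apply (Rmult_le_reg_l (IZR e)); auto. replace (IZR e * (1 / IZR e)) with 1 by (field; lra). auto.
Qed.

Section Values.
Variable val : nat -> Z.

Definition sumz (l : list nat) (zs : list Z) : nat :=
  fold_right (fun z acc => (length (filter (fun n => Z.eqb (val n) z) l) + acc)%nat) 0%nat zs.

Lemma sumz_cons n l zs :
  sumz (n :: l) zs = (sumz l zs + length (filter (fun z => Z.eqb (val n) z) zs))%nat.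
Proof.
  induction zs as [|z zs IH]; simpl; auto. rewrite IH.
  destruct (Z.eqb (val n) z); simpl; lia.
Qed.

Lemma in_filter_ge1 v zs : In v zs -> (1 <= length (filter (fun z => Z.eqb v z) zs))%nat.
Proof.
  induction zs as [|z zs IH]; simpl; intros H; [contradiction|].
  destruct H as [E|H].
  - subst. rewrite Z.eqb_refl. simpl. lia.
  - destruct (Z.eqb v z); simpl; [lia|auto].
Qed.

Lemma count_le_sumz (P : nat -> bool) l zs :
  (forall n, In n l -> P n = true -> In (val n) zs) -> (length (filter P l) <= sumz l zs)%nat.
Proof.
  induction l as [|n l IH]; intros H; simpl.
  - lia.
  - rewrite sumz_cons. specialize (IH (fun m Hm => H m (or_intror Hm))).
    destruct (P n) eqn:E; simpl.
    + pose proof (in_filter_ge1 _ _ (H n (or_introl eq_refl) E)). lia.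
    + lia.
Qed.

Lemma sumz_le l zs k : (forall z, (length (filter (fun n => Z.eqb (val n) z) l) <= k)%nat) ->
  (sumz l zs <= k * length zs)%nat.
Proof.
  intros H. induction zs as [|z zs IH]; simpl; [lia|]. specialize (H z). lia.
Qed.
End Values.

Lemma zrange_in (Mz : nat) (v : Z) : (- Z.of_nat Mz <= v <= Z.of_nat Mz)%Z ->
  In v (map (fun i => (Z.of_nat i - Z.of_nat Mz)%Z) (seq 0 (2 * Mz + 1))).
Proof.
  intros H. apply in_map_iff. exists (Z.to_nat (v + Z.of_nat Mz)). split; [lia|].
  apply in_seq. lia.
Qed.

Lemma caseB1_count (D : R -> R -> R) (k : nat) (B : R) :
  0 < B -> (forall y, IsPoly k (fun x => D x y)) ->
  (forall n N : nat, IsInt (B * D (INR n) (INR N))) ->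
  forall N : nat, (exists x, D x (INR N) <> D 0 (INR N)) ->
  forall C, 0 < C ->
  INR (length (filter (fun n => Rltb (Rabs (D (INR n) (INR N))) (C * INR N)) (seq 1 N)))
    <= INR k * (2 * (B * C * INR N) + 3).
Proof.
  intros HB Hpoly Hint N Hnc C HC.
  set (val := fun n => Int_part (B * D (INR n) (INR N))).
  assert (Hval: forall n, IZR (val n) = B * D (INR n) (INR N)).
  { intros n. destruct (Hint n N) as [z Hz]. unfold val. rewrite Hz.
    rewrite <- (Int_part_spec (IZR z) z); auto. lra. }
  set (X := B * C * INR N).
  assert (HX: 0 <= X) by (unfold X; pose proof (pos_INR N); repeat apply Rmult_le_pos; lra).
  pose proof (archimed X) as [A1 A2].
  set (Mz := Z.to_nat (up X)).
  assert (HMz: INR Mz <= X + 1).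
  { unfold Mz. rewrite INR_IZR_INZ, Z2Nat.id; [lra|]. apply le_IZR. lra. }
  set (zs := map (fun i => (Z.of_nat i - Z.of_nat Mz)%Z) (seq 0 (2 * Mz + 1))).
  assert (Hzs: length zs = (2 * Mz + 1)%nat) by (unfold zs; rewrite length_map, length_seq; auto).
  assert (Hin: forall n, In n (seq 1 N) ->
            Rltb (Rabs (D (INR n) (INR N))) (C * INR N) = true -> In (val n) zs).
  { intros n _ Hlt. apply Rltb_true in Hlt. apply zrange_in.
    assert (Rabs (IZR (val n)) < X).
    { rewrite Hval, Rabs_mult, (Rabs_right B) by lra. unfold X. rewrite Rmult_assoc.
      apply Rmult_lt_compat_l; auto. }
    rewrite <- abs_IZR in H.
    assert (IZR (Z.abs (val n)) < IZR (up X)) by lra. apply lt_IZR in H0.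
    unfold Mz. lia. }
  assert (Hper: forall z, (length (filter (fun n => Z.eqb (val n) z) (seq 1 N)) <= k)%nat).
  { intros z. destruct (Nat.le_gt_cases (length (filter (fun n => Z.eqb (val n) z) (seq 1 N))) k)
      as [G|G]; auto. exfalso.
    set (l' := filter (fun n => Z.eqb (val n) z) (seq 1 N)) in *.
    assert (Hz: forall x, D x (INR N) - IZR z / B = 0).
    { apply (IsPoly_roots k (fun x => D x (INR N) - IZR z / B) (map INR l')).
      - apply (IsPoly_ext _ (fun x => D x (INR N) + (- (IZR z / B)))); [intros; cbv beta; ring|].
        apply IsPoly_add; auto. apply IsPoly_const.
      - apply NoDup_map_NoDup_ForallPairs.
        + intros a b _ _ E. apply INR_eq; auto.
        + apply NoDup_filter, seq_NoDup.
      - rewrite length_map. lia.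
      - intros x Hx. apply in_map_iff in Hx. destruct Hx as [n [En Hn]]. subst x.
        unfold l' in Hn. apply filter_In in Hn. destruct Hn as [_ Hn]. apply Z.eqb_eq in Hn.
        pose proof (Hval n). rewrite Hn in H. rewrite H. field. lra. }
    destruct Hnc as [x Hx]. apply Hx. pose proof (Hz x). pose proof (Hz 0). lra. }
  pose proof (count_le_sumz val _ (seq 1 N) zs Hin).
  pose proof (sumz_le val (seq 1 N) zs k Hper).
  rewrite Hzs in H0.
  assert (Hc: (length (filter (fun n => Rltb (Rabs (D (INR n) (INR N))) (C * INR N)) (seq 1 N))
            <= k * (2 * Mz + 1))%nat) by lia.
  apply le_INR in Hc. rewrite mult_INR, plus_INR, mult_INR in Hc. simpl in Hc.
  assert (0 <= INR k) by apply pos_INR.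
  assert (INR k * (2 * INR Mz + 1) <= INR k * (2 * X + 3)) by (apply Rmult_le_compat_l; lra).
  lra.
Qed.


Lemma explode_intro (q p : bipoly) :
  (forall delta, 0 < delta < 1 -> exists C, 0 < C /\ exists (Nd : nat) (bad : nat -> nat -> bool),
     (forall N, (Nd < N)%nat -> INR (length (filter (bad N) (seq 1 N))) <= delta * INR N) /\
     (forall N, (Nd < N)%nat -> forall n : nat, delta * INR N <= INR n <= INR N -> bad N n = false ->
        forall m : nat, delta * INR N <= INR m <= INR N ->
        C * INR N <= Rabs (beval q (INR m) (INR N) - beval p (INR n) (INR N)))) ->
  exploding_differences q p.
Proof.
  intros H delta Hd. destruct (H delta Hd) as [C [HC [Nd [bad [Hcnt Hfar]]]]].
  exists C, Nd, (fun N => if Nat.leb N Nd then nil else filter (bad N) (seq 1 N)).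
  split; [auto|split].
  - intros N. destruct (Nat.leb N Nd) eqn:E.
    + split; [constructor|]. simpl. apply Rmult_le_pos; [lra|apply pos_INR].
    + apply Nat.leb_gt in E. split; [|apply Hcnt; auto].
      apply Forall_forall. intros g Hg. apply filter_In in Hg. destruct Hg as [Hg _].
      apply in_seq in Hg. lia.
  - intros N HN n Hn Hni m Hm. apply Rle_ge.
    assert (E: Nat.leb N Nd = false) by (apply Nat.leb_gt; auto). rewrite E in Hni.
    apply (Hfar N HN n Hn); auto.
    destruct (bad N n) eqn:Eb; auto. exfalso. apply Hni. apply filter_In. split; auto.
    apply in_seq.
    assert (0 < INR N) by (apply lt_0_INR; lia).
    assert (0 < INR n) by nra. assert (n <> 0%nat) by (intros E0; subst; simpl in *; lra).
    assert (n <= N)%nat by (apply INR_le; lra). lia.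
Qed.

Lemma pow_ge_N (y : R) (k : nat) : 1 <= y -> (2 <= k)%nat -> y <= y ^ (k - 1).
Proof.
  intros Hy Hk. pattern y at 1. rewrite <- pow_1. apply Rle_pow; [lra|lia].
Qed.

Lemma rat_form nc dc nr dr n :
  IZR nc / IZR (Zpos dc) * INR n + IZR nr / IZR (Zpos dr) =
  IZR (nc * Zpos dr * Z.of_nat n + nr * Zpos dc) / IZR (Zpos dc * Zpos dr).
Proof.
  rewrite plus_IZR, !mult_IZR, <- INR_IZR_INZ.
  assert (0 < IZR (Zpos dc)) by (apply IZR_lt; lia).
  assert (0 < IZR (Zpos dr)) by (apply IZR_lt; lia).
  field. lra.
Qed.

Lemma many_pts (P : nat -> Prop) : (forall N0 : nat, exists N, (N0 < N)%nat /\ P N) ->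
  forall m, exists l, NoDup l /\ length l = m /\ forall N, In N l -> P N.
Proof.
  intros H m. induction m as [|m [l [Hl [Hlen HP]]]].
  - exists nil. split; [constructor|]. split; auto. intros; contradiction.
  - set (M := fold_right max 0%nat l).
    assert (HM: forall x, In x l -> (x <= M)%nat).
    { unfold M. clear. induction l as [|a l IH]; simpl; intros x Hx; [contradiction|].
      destruct Hx as [E|Hx]; [subst; lia|]. specialize (IH x Hx). lia. }
    destruct (H M) as [N [HN HPN]]. exists (N :: l). split.
    + constructor; auto. intros Hin. specialize (HM N Hin). lia.
    + split; [simpl; auto|]. intros x [E|Hx]; [subst; auto|auto].
Qed.

Theorem mainTheorem5 (p q : bipoly) (k : nat) (c r : R) :
  (1 < k)%nat ->
  has_degree p k -> has_degree q k ->
  depends_on_n p -> depends_on_n q ->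
  Pj_nonconstant p k -> Pj_nonconstant q k ->
  Pj q k 0 <= Pj p k 0 ->
  (forall y, 0 < y <= 1 -> gammak p q k y = c * y) ->
  (forall y, 0 < y <= 1 -> Rk p q k y = r) ->
  exploding_differences q p \/
  ((exists qc : Q, c = Q2R qc) /\ (exists qr : Q, r = Q2R qr) /\
   exists d : R,
     (forall x y : R, beval q (c * x + r) y - beval p x y = d) /\
     forall delta : R, 0 < delta < 1 ->
       exists (W : R) (Nd : nat), 0 < W /\
         forall N : nat, (Nd < N)%nat ->
           forall n : nat, delta * INR N <= INR n <= INR N ->
             forall m : nat,
               (INR m = c * INR n + r /\
                beval q (INR m) (INR N) - beval p (INR n) (INR N) = d) \/
               Rabs (beval q (INR m) (INR N) - beval p (INR n) (INR N))
                 >= W * INR N ^ (k - 1)).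
Proof.
  intros Hk Hdp Hdq _ _ Hpn Hqn H0 Hg Hr.
  assert (Hk2: (2 <= k)%nat) by lia.
  pose proof (hasdeg_ok p k Hdp) as Dp. pose proof (hasdeg_ok q k Hdq) as Dq.
  destruct (gamma_facts p q k c r Hpn Hqn H0 Hg Hr) as [Hc Hid].
  destruct (D_small p q k c r Hk2 Dp Dq Hc Hid) as [K HK].
  pose proof (key_bound p q k c r K Hk2 Hqn Hc HK) as KEY.
  set (D := fun x y => beval q (c * x + r) y - beval p x y).
  destruct (classic ((exists qc : Q, c = Q2R qc) /\ (exists qr : Q, r = Q2R qr))) as [[[qc Hqc] [qr Hqr]]|Hnr].
  2:{
    left. apply explode_intro. intros delta Hd.
    destruct (density c r Hnr delta ltac:(lra)) as [eps [He [N1 HN1]]].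
    destruct (KEY delta eps Hd He) as [W [HW [N2 HN2]]].
    exists W. split; auto. exists (max N1 N2), (fun _ n => badb eps (c * INR n + r)).
    split.
    - intros N HN. apply HN1. lia.
    - intros N HN n Hn Hb m Hm. destruct (HN2 N ltac:(lia)) as [HN1' HN2'].
      pose proof (not_bad_far _ _ Hb (Z.of_nat m)) as Hf. rewrite <- INR_IZR_INZ in Hf.
      pose proof (HN2' n Hn m Hf).
      pose proof (pow_ge_N (INR N) k HN1' Hk2).
      assert (W * INR N <= W * INR N ^ (k-1)) by (apply Rmult_le_compat_l; lra). lra. }
  destruct qc as [nc dc]. destruct qr as [nr dr]. rewrite Q2R_frac in Hqc, Hqr.
  set (e := (Zpos dc * Zpos dr)%Z).
  assert (He: 0 < IZR e) by (apply IZR_lt; unfold e; lia).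
  set (T := fun n : nat => (nc * Zpos dr * Z.of_nat n + nr * Zpos dc)%Z).
  assert (Hx: forall n, c * INR n + r = IZR (T n) / IZR e).
  { intros n. rewrite Hqc, Hqr. apply rat_form. }
  assert (Ht: 0 < 1 / IZR e) by (apply Rdiv_lt_0_compat; lra).
  assert (FAR: forall delta, 0 < delta < 1 -> exists W, 0 < W /\ exists N2 : nat, forall N : nat, (N2 < N)%nat ->
      1 <= INR N /\ forall n : nat, delta * INR N <= INR n <= INR N -> forall m : nat,
      INR m <> c * INR n + r ->
      W * INR N ^ (k-1) <= Rabs (beval q (INR m) (INR N) - beval p (INR n) (INR N))).
  { intros delta Hd. destruct (KEY delta (1 / IZR e) Hd Ht) as [W [HW [N2 HN2]]].
    exists W. split; auto. exists N2. intros N HN. destruct (HN2 N HN) as [A B]. split; auto.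
    intros n Hn m Hm. apply B; auto. rewrite Hx in *. apply spacing; auto. }
  destruct (classic (exists d, forall x y, D x y = d)) as [[d Hd]|Hnd].
  -
    right. split; [exists (Qmake nc dc); rewrite Q2R_frac; auto|].
    split; [exists (Qmake nr dr); rewrite Q2R_frac; auto|].
    exists d. split; [exact Hd|].
    intros delta Hdl. destruct (FAR delta Hdl) as [W [HW [N2 HN2]]].
    exists W, N2. split; auto. intros N HN n Hn m.
    destruct (HN2 N HN) as [_ B].
    destruct (Req_dec (INR m) (c * INR n + r)) as [E|E].
    + left. split; auto. rewrite E. apply (Hd (INR n) (INR N)).
    + right. apply Rle_ge. apply B; auto.
  - left.
    assert (Hpolyx: forall y, IsPoly k (fun x => D x y)).
    { intros y. unfold D. apply (IsPoly_ext _ (fun x => beval q (c*x+r) y + (-1) * beval p (1*x+0) y)).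
      - intros x. cbv beta. replace (1*x+0) with x by ring. ring.
      - apply IsPoly_add; [apply beval_IsPoly_x; auto|]. apply IsPoly_scal, beval_IsPoly_x; auto. }
    destruct (classic (exists N0 : nat, forall N : nat, (N0 < N)%nat -> exists x, D x (INR N) <> D 0 (INR N)))
      as [[N0 HN0]|Hno].
    +
      set (B := IZR e ^ k).
      assert (HB: 0 < B) by (unfold B; apply pow_lt; lra).
      assert (Hint: forall n N : nat, IsInt (B * D (INR n) (INR N))).
      { intros n N. unfold D. rewrite Hx. rewrite Rmult_minus_distr_l.
        unfold Rminus. apply IsInt_add.
        - rewrite (INR_IZR_INZ N). apply beval_int_scaled; auto; lra.
        - replace (- (B * beval p (INR n) (INR N))) with ((-1) * B * beval p (INR n) (INR N)) by ring.
          repeat apply IsInt_mul.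
          + exists (-1)%Z. auto.
          + unfold B. apply IsInt_pow, IsInt_IZR.
          + apply beval_int; apply IsInt_INR. }
      apply explode_intro. intros delta Hdl.
      destruct (FAR delta Hdl) as [W [HW [N2 HN2]]].
      set (C1 := delta / (4 * (INR k + 1) * B)).
      assert (Hk0: 0 <= INR k) by apply pos_INR.
      assert (HC1: 0 < C1) by (unfold C1; apply Rdiv_lt_0_compat; [lra|]; apply Rmult_lt_0_compat; lra).
      destruct (large_N (6 * INR k / delta)) as [N3 HN3].
      exists (Rmin C1 W). split; [apply Rmin_glb_lt; auto|].
      exists (max N0 (max N2 N3)), (fun N n => Rltb (Rabs (D (INR n) (INR N))) (C1 * INR N)).
      split.
      * intros N HN. pose proof (caseB1_count D k B HB Hpolyx Hint N (HN0 N ltac:(lia)) C1 HC1) as Hc1.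
        specialize (HN3 N ltac:(lia)).
        assert (3 * INR k <= delta * INR N / 2).
        { assert (6 * INR k <= delta * INR N) by (apply div_lt; lra). lra. }
        assert (E1: INR k * (2 * (B * C1 * INR N)) = delta * INR N / 2 * (INR k / (INR k + 1))).
        { unfold C1. field. lra. }
        assert (INR k / (INR k + 1) <= 1).
        { apply (Rmult_le_reg_r (INR k + 1)); [lra|]. unfold Rdiv. rewrite Rmult_assoc, Rinv_l by lra. lra. }
        assert (0 <= delta * INR N / 2) by (pose proof (pos_INR N); nra).
        assert (delta * INR N / 2 * (INR k / (INR k + 1)) <= delta * INR N / 2) by nra.
        lra.
      * intros N HN n Hn Hb m Hm. apply Rltb_false in Hb.
        destruct (HN2 N ltac:(lia)) as [HN1' B2].
        pose proof (Rmin_l C1 W). pose proof (Rmin_r C1 W).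
        assert (0 <= INR N) by apply pos_INR.
        destruct (Req_dec (INR m) (c * INR n + r)) as [E|E].
        -- rewrite E. fold (D (INR n) (INR N)).
           assert (Rmin C1 W * INR N <= C1 * INR N) by (apply Rmult_le_compat_r; lra). lra.
        -- pose proof (B2 n Hn m E). pose proof (pow_ge_N (INR N) k HN1' Hk2).
           assert (Rmin C1 W * INR N <= W * INR N) by (apply Rmult_le_compat_r; lra).
           assert (W * INR N <= W * INR N ^ (k-1)) by (apply Rmult_le_compat_l; lra). lra.
    +
      assert (Hinf: forall N0 : nat, exists N, (N0 < N)%nat /\ forall x, D x (INR N) = D 0 (INR N)).
      { intros N0. apply NNPP. intros Hc'. apply Hno. exists N0. intros N HN.
        apply NNPP. intros Hx'. apply Hc'. exists N. split; auto. intros x.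
        apply NNPP. intros Hne. apply Hx'. exists x. auto. }
      destruct (many_pts _ Hinf (S k)) as [l [Hl [Hlen HP]]].
      assert (Hyonly: forall x y, D x y = D 0 y).
      { intros x. assert (forall y, D x y - D 0 y = 0).
        { apply (IsPoly_roots k (fun y => D x y - D 0 y) (map INR l)).
          - unfold D. apply (IsPoly_ext _ (fun y => (beval q (c*x+r) y + (-1) * beval p x y) +
               (-1) * (beval q (c*0+r) y + (-1) * beval p 0 y))); [intros; cbv beta; ring|].
            apply IsPoly_add; [apply IsPoly_add|apply IsPoly_scal, IsPoly_add];
              try apply IsPoly_scal; apply beval_IsPoly_y; auto.
          - apply NoDup_map_NoDup_ForallPairs; auto. intros a b _ _ E. apply INR_eq; auto.
          - rewrite length_map. lia.
          - intros y Hy. apply in_map_iff in Hy. destruct Hy as [N [EN HN]]. subst y.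
            rewrite (HP N HN x). ring. }
        intros y. specialize (H y). lra. }
      set (u := fun y => D 0 y).
      assert (Hu: exists y1, u y1 <> u 0).
      { apply NNPP. intros Hn. apply Hnd. exists (u 0). intros x y. rewrite Hyonly.
        apply NNPP. intros Hne. apply Hn. exists y. auto. }
      assert (Hupoly: IsPoly k u).
      { unfold u, D. apply (IsPoly_ext _ (fun y => beval q (c*0+r) y + (-1) * beval p 0 y)); [intros; cbv beta; ring|].
        apply IsPoly_add; [|apply IsPoly_scal]; apply beval_IsPoly_y; auto. }
      destruct k as [|k']; [lia|].
      destruct Hupoly as [g [Hgp Eg]].
      assert (Hg0: exists y, g y <> 0).
      { destruct Hu as [y1 Hy1]. exists y1. intros E. apply Hy1. rewrite (Eg y1), E. ring. }
      destruct (IsPoly_grow k' g Hgp Hg0) as [C0 [Y [HC0 HY]]].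
      apply explode_intro. intros delta Hdl.
      destruct (FAR delta Hdl) as [W [HW [N2 HN2]]].
      destruct (large_N (Rmax Y (2 * Rabs (u 0) / C0))) as [N3 HN3].
      exists (Rmin (C0/2) W). split; [apply Rmin_glb_lt; lra|].
      exists (max N2 N3), (fun _ _ => false). split.
      * intros N _. rewrite filter_all_false by auto. simpl. apply Rmult_le_pos; [lra|apply pos_INR].
      * intros N HN n Hn _ m Hm.
        destruct (HN2 N ltac:(lia)) as [HN1' B2].
        specialize (HN3 N ltac:(lia)).
        pose proof (Rmax_l Y (2 * Rabs (u 0) / C0)). pose proof (Rmax_r Y (2 * Rabs (u 0) / C0)).
        pose proof (Rmin_l (C0/2) W). pose proof (Rmin_r (C0/2) W).
        assert (0 <= INR N) by apply pos_INR.
        destruct (Req_dec (INR m) (c * INR n + r)) as [E|E].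
        -- rewrite E. fold (D (INR n) (INR N)). rewrite Hyonly. fold (u (INR N)).
           specialize (HY (INR N) ltac:(lra)).
           assert (Hu0: Rabs (u 0) <= C0 / 2 * INR N).
           { assert (2 * Rabs (u 0) <= C0 * INR N) by (apply div_lt; lra). lra. }
           rewrite (Eg (INR N)).
           pose proof (Rabs_triang_inv (INR N * g (INR N)) (- u 0)). rewrite Rabs_Ropp in H5.
           replace (INR N * g (INR N) - - u 0) with (u 0 + INR N * g (INR N)) in H5 by ring.
           rewrite Rabs_mult, (Rabs_right (INR N)) in H5 by lra.
           assert (C0 * INR N <= INR N * Rabs (g (INR N))) by nra.
           assert (Rmin (C0/2) W * INR N <= C0/2 * INR N) by (apply Rmult_le_compat_r; lra).
           lra.
        -- pose proof (B2 n Hn m E). pose proof (pow_ge_N (INR N) (S k') HN1' Hk2).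
           assert (Rmin (C0/2) W * INR N <= W * INR N) by (apply Rmult_le_compat_r; lra).
           assert (W * INR N <= W * INR N ^ (S k' - 1)) by (apply Rmult_le_compat_l; lra). lra.
Qed.
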